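(* Let $\mathfrak g$ be the $7$-dimensional real Lie algebra described in the context, with parameters $x,y,z,w$ and $A,B,C$, and let $\varphi=e^{127}+e^{347}+e^{567}+e^{135}-e^{146}-e^{236}-e^{245}$. Then $d\varphi=0$ if and only if $$\theta(A)\omega_1=\theta(B)\omega_7+x\omega_1+y\omega_2,\qquad \theta(A)\omega_2=\theta(C)\omega_7+z\omega_1+w\omega_2,\qquad \theta(B)\omega_2=\theta(C)\omega_1.$$
   Context: Let $\mathfrak g$ be a real Lie algebra with basis $\{e_1,\dots,e_7\}$ and dual basis $\{e^1,\dots,e^7\}$; write $e^{ij\cdots k}=e^i\wedge\cdots\wedge e^k$. Put $\mathfrak g_1=\mathrm{span}\{e_3,e_4,e_5,e_6\}$. The bracket is determined by $x,y,z,w\in\mathbb R$ and $A,B,C\in\mathfrak{gl}_4(\mathbb R)$ (matrices w.r.t. $e_3,\dots,e_6$) by: $[e_1,e_2]=0$, $[e_7,e_1]=xe_1+ye_2$, $[e_7,e_2]=ze_1+we_2$, $[e_7,v]=Av$, $[e_1,v]=Bv$, $[e_2,v]=Cv$ for $v\in\mathfrak g_1$, $[\mathfrak g_1,\mathfrak g_1]=0$; it is assumed that $\mathrm{tr}B=\mathrm{tr}C=0$, $[A,B]=xB+yC$, $[A,C]=zB+wC$, $[B,C]=0$. The exterior derivative on $\Lambda^k\mathfrak g^*$ is $d\alpha(X_0,\dots,X_k)=\sum_{i<j}(-1)^{i+j}\alpha([X_i,X_j],X_0,\dots,\widehat{X_i},\dots,\widehat{X_j},\dots,X_k)$. $\omega_7=e^{34}+e^{56}$,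 $\omega_1=e^{35}-e^{46}$, $\omega_2=-e^{36}-e^{45}$, regarded as elements of $\Lambda^2\mathfrak g_1^*$. For $M\in\mathfrak{gl}_4(\mathbb R)$, $\theta(M)$ is the derivation of $\Lambda\mathfrak g_1^*$ given by $\theta(M)\alpha(X_1,\dots,X_k)=-\sum_i\alpha(X_1,\dots,MX_i,\dots,X_k)$. *)

(* Defs.v *)
(* Indices: e_1,...,e_7 of g are the basis column vectors
   'e_0,...,'e_6 of 'cV[R]_7 (0-based); g1 = span{e_3,...,e_6} is identified
   with 'cV[R]_4 via indices 2..5. *)
From HB Require Import structures.
From mathcomp Require Import all_boot all_order all_algebra.
Set Implicit Arguments. Unset Strict Implicit. Unset Printing Implicit Defensive.
Import Order.TTheory GRing.Theory Num.Theory.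
Local Open Scope ring_scope.

Section Defs.
Variable R : realFieldType.

Definition ebas (j : 'I_7) : 'cV[R]_7 := delta_mx j 0.
Definition ebn (j : nat) : 'cV[R]_7 := ebas (inord j).

Definition emb (v : 'cV[R]_4) : 'cV[R]_7 :=
  \col_(i < 7) (if (2 <= i < 6)%N then v (inord (i - 2)) 0 else 0).
Definition proj (X : 'cV[R]_7) : 'cV[R]_4 := \col_(k < 4) X (inord (k + 2)) 0.

Definition ad7 (x y z w : R) (A : 'M[R]_4) (j : 'I_7) : 'cV[R]_7 :=
  if val j == 0%N then x *: ebn 0 + y *: ebn 1
  else if val j == 1%N then z *: ebn 0 + w *: ebn 1
  else emb (A *m proj (ebas j)).
Definition ad1 (B : 'M[R]_4) (j : 'I_7) : 'cV[R]_7 := emb (B *m proj (ebas j)).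

(* the bracket [e_i, e_j] as described: [e1,e2]=0, [e7,e1]=x e1+y e2,
   [e7,e2]=z e1+w e2, [e7,v]=Av, [e1,v]=Bv, [e2,v]=Cv, [g1,g1]=0,
   extended antisymmetrically *)
Definition brb (x y z w : R) (A B C : 'M[R]_4) (i j : 'I_7) : 'cV[R]_7 :=
  if val i == 6%N then ad7 x y z w A j
  else if val j == 6%N then - ad7 x y z w A i
  else if val i == 0%N then ad1 B j
  else if val j == 0%N then - ad1 B i
  else if val i == 1%N then ad1 C j
  else if val j == 1%N then - ad1 C i
  else 0.

Definition bracket (x y z w : R) (A B C : 'M[R]_4) (X Y : 'cV[R]_7) : 'cV[R]_7 :=
  \sum_(i < 7) \sum_(j < 7) (X i 0 * Y j 0) *: brb x y z w A B C i j.

(* e^{abc}(X,Y,Z) = det (e^{a_r}(X_s)) on g (1-based indices a b c) *)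
Definition e3 (a b c : nat) (X Y Z : 'cV[R]_7) : R :=
  \det (\matrix_(r < 3, s < 3)
          (nth 0 [:: X; Y; Z] s) (inord ((nth 0%N [:: a; b; c] r) - 1)) 0).

(* e^{ab}(X,Y) on g1 (1-based indices a b in {3,..,6}) *)
Definition e2 (a b : nat) (X Y : 'cV[R]_4) : R :=
  \det (\matrix_(r < 2, s < 2)
          (nth 0 [:: X; Y] s) (inord ((nth 0%N [:: a; b] r) - 3)) 0).

Definition phi (X Y Z : 'cV[R]_7) : R :=
  e3 1 2 7 X Y Z + e3 3 4 7 X Y Z + e3 5 6 7 X Y Z + e3 1 3 5 X Y Z
  - e3 1 4 6 X Y Z - e3 2 3 6 X Y Z - e3 2 4 5 X Y Z.

(* exterior derivative of a 3-form:
   d a (X0,..,X3) = sum_{i<j} (-1)^(i+j) a([Xi,Xj], X0,..^i..^j..,X3) *)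
Definition d3 (br : 'cV[R]_7 -> 'cV[R]_7 -> 'cV[R]_7)
  (a : 'cV[R]_7 -> 'cV[R]_7 -> 'cV[R]_7 -> R) (X0 X1 X2 X3 : 'cV[R]_7) : R :=
  - a (br X0 X1) X2 X3 + a (br X0 X2) X1 X3 - a (br X0 X3) X1 X2
  - a (br X1 X2) X0 X3 + a (br X1 X3) X0 X2 - a (br X2 X3) X0 X1.

Definition omega7 (X Y : 'cV[R]_4) : R := e2 3 4 X Y + e2 5 6 X Y.
Definition omega1 (X Y : 'cV[R]_4) : R := e2 3 5 X Y - e2 4 6 X Y.
Definition omega2 (X Y : 'cV[R]_4) : R := - e2 3 6 X Y - e2 4 5 X Y.

Definition theta (M : 'M[R]_4) (al : 'cV[R]_4 -> 'cV[R]_4 -> R)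
  (X Y : 'cV[R]_4) : R := - (al (M *m X) Y + al X (M *m Y)).

End Defs.

(* Main.v *)
Require Import Defs.
From HB Require Import structures.
From mathcomp Require Import all_boot all_order all_algebra.
From mathcomp Require Import ring.
Import Order.TTheory GRing.Theory Num.Theory.
Local Open Scope ring_scope.
Section S.
Variable R : realFieldType.
Lemma sum7 (F : 'I_7 -> R) : \sum_(i < 7) F i =
  F (inord 0) + F (inord 1) + F (inord 2) + F (inord 3) + F (inord 4) + F (inord 5) + F (inord 6).
Proof.
rewrite !big_ord_recr big_ord0 /= GRing.add0r.
by do !congr (_ + _); congr (F _); apply/val_inj; rewrite /= inordK.
Qed.
Lemma sum4 (F : 'I_4 -> R) : \sum_(i < 4) F i =
  F (inord 0) + F (inord 1) + F (inord 2) + F (inord 3).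
Proof.
rewrite !big_ord_recr big_ord0 /= GRing.add0r.
by do !congr (_ + _); congr (F _); apply/val_inj; rewrite /= inordK.
Qed.
Lemma val7 n : (n < 7)%N -> val (inord n : 'I_7) = n. Proof. exact: inordK. Qed.
Lemma val4 n : (n < 4)%N -> val (inord n : 'I_4) = n. Proof. exact: inordK. Qed.

Lemma e3E a b c (X Y Z : 'cV[R]_7) : e3 a.+1 b.+1 c.+1 X Y Z =
  X (inord a) 0 * Y (inord b) 0 * Z (inord c) 0
  - X (inord a) 0 * Z (inord b) 0 * Y (inord c) 0
  - Y (inord a) 0 * X (inord b) 0 * Z (inord c) 0
  + Y (inord a) 0 * Z (inord b) 0 * X (inord c) 0
  + Z (inord a) 0 * X (inord b) 0 * Y (inord c) 0
  - Z (inord a) 0 * Y (inord b) 0 * X (inord c) 0.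
Proof.
rewrite /e3 (expand_det_row _ ord0) !big_ord_recr big_ord0 /=.
rewrite /cofactor !(expand_det_row _ ord0) !big_ord_recr !big_ord0 /=.
rewrite /cofactor !det_mx11 !mxE /= !subn1 /=.
ring.
Qed.

Lemma e2E a b (X Y : 'cV[R]_4) : e2 a.+3 b.+3 X Y =
  X (inord a) 0 * Y (inord b) 0 - Y (inord a) 0 * X (inord b) 0.
Proof.
rewrite /e2 (expand_det_row _ ord0) !big_ord_recr big_ord0 /=.
rewrite /cofactor !det_mx11 !mxE /= !subSS !subn0.
ring.
Qed.

Lemma ebasE (j k : 'I_7) : ebas R j k 0 = (val j == val k)%:R :> R.
Proof. by rewrite /ebas mxE eqxx andbT val_eqE eq_sym. Qed.

Lemma colE (M : 'M[R]_4) (j : 'I_7) (i : 'I_4) :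
  (M *m proj (ebas R j)) i 0 = if (2 <= j < 6)%N then M i (inord j.-2) else 0.
Proof.
rewrite mxE sum4 !mxE !eqxx !andbT -!val_eqE !val4 // !addn2 !val7 //.
by case: j => [[|[|[|[|[|[|[|j]]]]]]] Hj] //=; ring.
Qed.

Definition a7 (x y z w : R) (A : 'M[R]_4) (j k : nat) : R :=
  if j == 0%N then (if k == 0%N then x else if k == 1%N then y else 0)
  else if j == 1%N then (if k == 0%N then z else if k == 1%N then w else 0)
  else if (2 <= j < 6)%N && (2 <= k < 6)%N then A (inord k.-2) (inord j.-2) else 0.
Definition a1 (B : 'M[R]_4) (j k : nat) : R :=
  if (2 <= j < 6)%N && (2 <= k < 6)%N then B (inord k.-2) (inord j.-2) else 0.
Definition T (x y z w : R) (A B C : 'M[R]_4) (i j k : nat) : R :=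
  if i == 6%N then a7 x y z w A j k
  else if j == 6%N then - a7 x y z w A i k
  else if i == 0%N then a1 B j k
  else if j == 0%N then - a1 B i k
  else if i == 1%N then a1 C j k
  else if j == 1%N then - a1 C i k
  else 0.

Lemma embE (v : 'cV[R]_4) (k : 'I_7) :
  emb v k 0 = if (2 <= k < 6)%N then v (inord k.-2) 0 else 0.
Proof. by rewrite mxE; case: k => [[|[|[|[|[|[|[|k]]]]]]] Hk]. Qed.

Lemma ad1E (M : 'M[R]_4) (j k : 'I_7) : ad1 M j k 0 = a1 M j k.
Proof.
rewrite /ad1 embE /a1.
case: k => [[|[|[|[|[|[|[|k]]]]]]] Hk] //=; rewrite ?colE;
  case: j => [[|[|[|[|[|[|[|j]]]]]]] Hj] //=.
Qed.

Lemma ad7E (x y z w : R) (A : 'M[R]_4) (j k : 'I_7) : ad7 x y z w A j k 0 = a7 x y z w A j k.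
Proof.
rewrite /ad7 /a7; case: ifP => _.
  rewrite !mxE !eqxx !andbT -!val_eqE !val7 //.
  by case: k => [[|[|[|[|[|[|[|k]]]]]]] Hk] //=; ring.
case: ifP => _.
  rewrite !mxE !eqxx !andbT -!val_eqE !val7 //.
  by case: k => [[|[|[|[|[|[|[|k]]]]]]] Hk] //=; ring.
rewrite embE.
case: k => [[|[|[|[|[|[|[|k]]]]]]] Hk] //=; rewrite ?colE;
  case: j => [[|[|[|[|[|[|[|j]]]]]]] Hj] //=.
Qed.

Lemma oppE (v : 'cV[R]_7) k : (- v) k 0 = - v k 0.
Proof. by rewrite mxE. Qed.

Lemma brbE (x y z w : R) (A B C : 'M[R]_4) (i j k : 'I_7) :
  brb x y z w A B C i j k 0 = T x y z w A B C i j k.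
Proof.
rewrite /brb /T; do !case: ifP => _; by rewrite ?oppE ?ad7E ?ad1E ?mxE.
Qed.

Lemma brk (x y z w : R) A B C X Y k :
  bracket x y z w A B C X Y k 0 = \sum_(i<7) \sum_(j<7) X i 0 * Y j 0 * brb x y z w A B C i j k 0.
Proof. rewrite /bracket summxE; apply: eq_bigr => i _; rewrite summxE; apply: eq_bigr => j _; by rewrite mxE. Qed.

Lemma brkT (x y z w : R) A B C X Y n : (n < 7)%N ->
  bracket x y z w A B C X Y (inord n) 0 = \sum_(i<7) \sum_(j<7) X i 0 * Y j 0 * T x y z w A B C i j n.
Proof.
move=> hn; rewrite brk; apply: eq_bigr => i _; apply: eq_bigr => j _.
by rewrite brbE val7.
Qed.
Definition D0123 (x y z w : R) (A B C : 'M[R]_4) : R := - B (inord 2) (inord 0) + B (inord 3) (inord 1) + C (inord 2) (inord 1) + C (inord 3) (inord 0).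
Definition D0124 (x y z w : R) (A B C : 'M[R]_4) : R := B (inord 1) (inord 0) + B (inord 3) (inord 2) + C (inord 0) (inord 0) + C (inord 2) (inord 2).
Definition D0125 (x y z w : R) (A B C : 'M[R]_4) : R := B (inord 0) (inord 0) + B (inord 3) (inord 3) - C (inord 1) (inord 0) + C (inord 2) (inord 3).
Definition D0134 (x y z w : R) (A B C : 'M[R]_4) : R := B (inord 1) (inord 1) + B (inord 2) (inord 2) + C (inord 0) (inord 1) - C (inord 3) (inord 2).
Definition D0135 (x y z w : R) (A B C : 'M[R]_4) : R := B (inord 0) (inord 1) + B (inord 2) (inord 3) - C (inord 1) (inord 1) - C (inord 3) (inord 3).
Definition D0145 (x y z w : R) (A B C : 'M[R]_4) : R := B (inord 0) (inord 2) - B (inord 1) (inord 3) - C (inord 0) (inord 3) - C (inord 1) (inord 2).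
Definition D0236 (x y z w : R) (A B C : 'M[R]_4) : R := A (inord 2) (inord 1) + A (inord 3) (inord 0) - B (inord 0) (inord 0) - B (inord 1) (inord 1).
Definition D0246 (x y z w : R) (A B C : 'M[R]_4) : R := x + A (inord 0) (inord 0) + A (inord 2) (inord 2) - B (inord 1) (inord 2) + B (inord 3) (inord 0).
Definition D0256 (x y z w : R) (A B C : 'M[R]_4) : R := - y - A (inord 1) (inord 0) + A (inord 2) (inord 3) - B (inord 1) (inord 3) - B (inord 2) (inord 0).
Definition D0346 (x y z w : R) (A B C : 'M[R]_4) : R := - y + A (inord 0) (inord 1) - A (inord 3) (inord 2) + B (inord 0) (inord 2) + B (inord 3) (inord 1).
Definition D0356 (x y z w : R) (A B C : 'M[R]_4) : R := - x - A (inord 1) (inord 1) - A (inord 3) (inord 3) + B (inord 0) (inord 3) - B (inord 2) (inord 1).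
Definition D0456 (x y z w : R) (A B C : 'M[R]_4) : R := - A (inord 0) (inord 3) - A (inord 1) (inord 2) - B (inord 2) (inord 2) - B (inord 3) (inord 3).
Definition D1236 (x y z w : R) (A B C : 'M[R]_4) : R := A (inord 2) (inord 0) - A (inord 3) (inord 1) - C (inord 0) (inord 0) - C (inord 1) (inord 1).
Definition D1246 (x y z w : R) (A B C : 'M[R]_4) : R := z - A (inord 1) (inord 0) - A (inord 3) (inord 2) - C (inord 1) (inord 2) + C (inord 3) (inord 0).
Definition D1256 (x y z w : R) (A B C : 'M[R]_4) : R := - w - A (inord 0) (inord 0) - A (inord 3) (inord 3) - C (inord 1) (inord 3) - C (inord 2) (inord 0).
Definition D1346 (x y z w : R) (A B C : 'M[R]_4) : R := - w - A (inord 1) (inord 1) - A (inord 2) (inord 2) + C (inord 0) (inord 2) + C (inord 3) (inord 1).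
Definition D1356 (x y z w : R) (A B C : 'M[R]_4) : R := - z - A (inord 0) (inord 1) - A (inord 2) (inord 3) + C (inord 0) (inord 3) - C (inord 2) (inord 1).
Definition D1456 (x y z w : R) (A B C : 'M[R]_4) : R := - A (inord 0) (inord 2) + A (inord 1) (inord 3) - C (inord 2) (inord 2) - C (inord 3) (inord 3).
Definition m4 (a b c d : nat) (X0 X1 X2 X3 : 'cV[R]_7) : R :=
  X0 (inord a) 0 * X1 (inord b) 0 * X2 (inord c) 0 * X3 (inord d) 0
  - X0 (inord a) 0 * X1 (inord b) 0 * X2 (inord d) 0 * X3 (inord c) 0
  - X0 (inord a) 0 * X1 (inord c) 0 * X2 (inord b) 0 * X3 (inord d) 0
  + X0 (inord a) 0 * X1 (inord c) 0 * X2 (inord d) 0 * X3 (inord b) 0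
  + X0 (inord a) 0 * X1 (inord d) 0 * X2 (inord b) 0 * X3 (inord c) 0
  - X0 (inord a) 0 * X1 (inord d) 0 * X2 (inord c) 0 * X3 (inord b) 0
  - X0 (inord b) 0 * X1 (inord a) 0 * X2 (inord c) 0 * X3 (inord d) 0
  + X0 (inord b) 0 * X1 (inord a) 0 * X2 (inord d) 0 * X3 (inord c) 0
  + X0 (inord b) 0 * X1 (inord c) 0 * X2 (inord a) 0 * X3 (inord d) 0
  - X0 (inord b) 0 * X1 (inord c) 0 * X2 (inord d) 0 * X3 (inord a) 0
  - X0 (inord b) 0 * X1 (inord d) 0 * X2 (inord a) 0 * X3 (inord c) 0
  + X0 (inord b) 0 * X1 (inord d) 0 * X2 (inord c) 0 * X3 (inord a) 0
  + X0 (inord c) 0 * X1 (inord a) 0 * X2 (inord b) 0 * X3 (inord d) 0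
  - X0 (inord c) 0 * X1 (inord a) 0 * X2 (inord d) 0 * X3 (inord b) 0
  - X0 (inord c) 0 * X1 (inord b) 0 * X2 (inord a) 0 * X3 (inord d) 0
  + X0 (inord c) 0 * X1 (inord b) 0 * X2 (inord d) 0 * X3 (inord a) 0
  + X0 (inord c) 0 * X1 (inord d) 0 * X2 (inord a) 0 * X3 (inord b) 0
  - X0 (inord c) 0 * X1 (inord d) 0 * X2 (inord b) 0 * X3 (inord a) 0
  - X0 (inord d) 0 * X1 (inord a) 0 * X2 (inord b) 0 * X3 (inord c) 0
  + X0 (inord d) 0 * X1 (inord a) 0 * X2 (inord c) 0 * X3 (inord b) 0
  + X0 (inord d) 0 * X1 (inord b) 0 * X2 (inord a) 0 * X3 (inord c) 0
  - X0 (inord d) 0 * X1 (inord b) 0 * X2 (inord c) 0 * X3 (inord a) 0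
  - X0 (inord d) 0 * X1 (inord c) 0 * X2 (inord a) 0 * X3 (inord b) 0
  + X0 (inord d) 0 * X1 (inord c) 0 * X2 (inord b) 0 * X3 (inord a) 0.
Definition m2 (a b : nat) (X Y : 'cV[R]_4) : R := X (inord a) 0 * Y (inord b) 0 - X (inord b) 0 * Y (inord a) 0.
Lemma brk0 (x y z w : R) (A B C : 'M[R]_4) (X Y : 'cV[R]_7) :
  bracket x y z w A B C X Y (inord 0) 0 = - X (inord 0) 0 * Y (inord 6) 0 * x - X (inord 1) 0 * Y (inord 6) 0 * z + X (inord 6) 0 * Y (inord 0) 0 * x + X (inord 6) 0 * Y (inord 1) 0 * z.
Proof. rewrite brkT //; under eq_bigr => i _ do rewrite sum7; rewrite sum7 !val7 // /T /a7 /a1 /=; ring. Qed.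
Lemma brk1 (x y z w : R) (A B C : 'M[R]_4) (X Y : 'cV[R]_7) :
  bracket x y z w A B C X Y (inord 1) 0 = - X (inord 0) 0 * Y (inord 6) 0 * y - X (inord 1) 0 * Y (inord 6) 0 * w + X (inord 6) 0 * Y (inord 0) 0 * y + X (inord 6) 0 * Y (inord 1) 0 * w.
Proof. rewrite brkT //; under eq_bigr => i _ do rewrite sum7; rewrite sum7 !val7 // /T /a7 /a1 /=; ring. Qed.
Lemma brk2 (x y z w : R) (A B C : 'M[R]_4) (X Y : 'cV[R]_7) :
  bracket x y z w A B C X Y (inord 2) 0 = X (inord 0) 0 * Y (inord 2) 0 * B (inord 0) (inord 0) + X (inord 0) 0 * Y (inord 3) 0 * B (inord 0) (inord 1) + X (inord 0) 0 * Y (inord 4) 0 * B (inord 0) (inord 2) + X (inord 0) 0 * Y (inord 5) 0 * B (inord 0) (inord 3) + X (inord 1) 0 * Y (inord 2) 0 * C (inord 0) (inord 0) + X (inord 1) 0 * Y (inord 3) 0 * C (inord 0) (inord 1) + X (inord 1) 0 * Y (inord 4) 0 * C (inord 0) (inord 2) + X (inord 1) 0 * Y (inord 5) 0 * C (inord 0) (inord 3) - X (inord 2) 0 * Y (inord 0) 0 * B (inord 0) (inord 0) - X (inord 2) 0 * Y (inord 1) 0 * C (inord 0) (inord 0) - X (inord 2) 0 * Y (inord 6) 0 * A (inord 0) (inord 0) - X (inord 3) 0 * Y (inord 0) 0 * B (inord 0) (inord 1) - X (inord 3) 0 * Y (inord 1) 0 * C (inord 0) (inord 1) - X (inord 3)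 0 * Y (inord 6) 0 * A (inord 0) (inord 1) - X (inord 4) 0 * Y (inord 0) 0 * B (inord 0) (inord 2) - X (inord 4) 0 * Y (inord 1) 0 * C (inord 0) (inord 2) - X (inord 4) 0 * Y (inord 6) 0 * A (inord 0) (inord 2) - X (inord 5) 0 * Y (inord 0) 0 * B (inord 0) (inord 3) - X (inord 5) 0 * Y (inord 1) 0 * C (inord 0) (inord 3) - X (inord 5) 0 * Y (inord 6) 0 * A (inord 0) (inord 3) + X (inord 6) 0 * Y (inord 2) 0 * A (inord 0) (inord 0) + X (inord 6) 0 * Y (inord 3) 0 * A (inord 0) (inord 1) + X (inord 6) 0 * Y (inord 4) 0 * A (inord 0) (inord 2) + X (inord 6) 0 * Y (inord 5) 0 * A (inord 0) (inord 3).
Proof. rewrite brkT //; under eq_bigr => i _ do rewrite sum7; rewrite sum7 !val7 // /T /a7 /a1 /=; ring. Qed.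
Lemma brk3 (x y z w : R) (A B C : 'M[R]_4) (X Y : 'cV[R]_7) :
  bracket x y z w A B C X Y (inord 3) 0 = X (inord 0) 0 * Y (inord 2) 0 * B (inord 1) (inord 0) + X (inord 0) 0 * Y (inord 3) 0 * B (inord 1) (inord 1) + X (inord 0) 0 * Y (inord 4) 0 * B (inord 1) (inord 2) + X (inord 0) 0 * Y (inord 5) 0 * B (inord 1) (inord 3) + X (inord 1) 0 * Y (inord 2) 0 * C (inord 1) (inord 0) + X (inord 1) 0 * Y (inord 3) 0 * C (inord 1) (inord 1) + X (inord 1) 0 * Y (inord 4) 0 * C (inord 1) (inord 2) + X (inord 1) 0 * Y (inord 5) 0 * C (inord 1) (inord 3) - X (inord 2) 0 * Y (inord 0) 0 * B (inord 1) (inord 0) - X (inord 2) 0 * Y (inord 1) 0 * C (inord 1) (inord 0) - X (inord 2) 0 * Y (inord 6) 0 * A (inord 1) (inord 0) - X (inord 3) 0 * Y (inord 0) 0 * B (inord 1) (inord 1) - X (inord 3) 0 * Y (inord 1) 0 * C (inord 1) (inord 1) - X (inord 3) 0 * Y (inord 6) 0 * A (inord 1) (inord 1) - X (inord 4) 0 * Y (inord 0) 0 * B (inord 1) (inord 2) - X (inord 4) 0 * Y (inord 1) 0 * C (inord 1) (inord 2) - X (inord 4) 0 * Y (inord 6) 0 * A (inord 1) (inord 2) - X (inord 5) 0 * Y (inord 0) 0 * B (inord 1) (inord 3) - X (inord 5) 0 * Y (inord 1) 0 * C (inord 1) (inord 3) - X (inord 5) 0 * Y (inord 6) 0 * A (inord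 1) (inord 3) + X (inord 6) 0 * Y (inord 2) 0 * A (inord 1) (inord 0) + X (inord 6) 0 * Y (inord 3) 0 * A (inord 1) (inord 1) + X (inord 6) 0 * Y (inord 4) 0 * A (inord 1) (inord 2) + X (inord 6) 0 * Y (inord 5) 0 * A (inord 1) (inord 3).
Proof. rewrite brkT //; under eq_bigr => i _ do rewrite sum7; rewrite sum7 !val7 // /T /a7 /a1 /=; ring. Qed.
Lemma brk4 (x y z w : R) (A B C : 'M[R]_4) (X Y : 'cV[R]_7) :
  bracket x y z w A B C X Y (inord 4) 0 = X (inord 0) 0 * Y (inord 2) 0 * B (inord 2) (inord 0) + X (inord 0) 0 * Y (inord 3) 0 * B (inord 2) (inord 1) + X (inord 0) 0 * Y (inord 4) 0 * B (inord 2) (inord 2) + X (inord 0) 0 * Y (inord 5) 0 * B (inord 2) (inord 3) + X (inord 1) 0 * Y (inord 2) 0 * C (inord 2) (inord 0) + X (inord 1) 0 * Y (inord 3) 0 * C (inord 2) (inord 1) + X (inord 1) 0 * Y (inord 4) 0 * C (inord 2) (inord 2) + X (inord 1) 0 * Y (inord 5) 0 * C (inord 2) (inord 3) - X (inord 2) 0 * Y (inord 0) 0 * B (inord 2) (inord 0) - X (inord 2) 0 * Y (inord 1) 0 * C (inord 2) (inord 0) - X (inord 2) 0 * Y (inord 6) 0 * A (inord 2) (inord 0) - X (inord 3) 0 * Y (inord 0) 0 * B (inord 2) (inord 1) - X (inord 3) 0 * Y (inord 1) 0 * C (inord 2) (inord 1) - X (inord 3) 0 * Y (inord 6) 0 *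 A (inord 2) (inord 1) - X (inord 4) 0 * Y (inord 0) 0 * B (inord 2) (inord 2) - X (inord 4) 0 * Y (inord 1) 0 * C (inord 2) (inord 2) - X (inord 4) 0 * Y (inord 6) 0 * A (inord 2) (inord 2) - X (inord 5) 0 * Y (inord 0) 0 * B (inord 2) (inord 3) - X (inord 5) 0 * Y (inord 1) 0 * C (inord 2) (inord 3) - X (inord 5) 0 * Y (inord 6) 0 * A (inord 2) (inord 3) + X (inord 6) 0 * Y (inord 2) 0 * A (inord 2) (inord 0) + X (inord 6) 0 * Y (inord 3) 0 * A (inord 2) (inord 1) + X (inord 6) 0 * Y (inord 4) 0 * A (inord 2) (inord 2) + X (inord 6) 0 * Y (inord 5) 0 * A (inord 2) (inord 3).
Proof. rewrite brkT //; under eq_bigr => i _ do rewrite sum7; rewrite sum7 !val7 // /T /a7 /a1 /=; ring. Qed.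
Lemma brk5 (x y z w : R) (A B C : 'M[R]_4) (X Y : 'cV[R]_7) :
  bracket x y z w A B C X Y (inord 5) 0 = X (inord 0) 0 * Y (inord 2) 0 * B (inord 3) (inord 0) + X (inord 0) 0 * Y (inord 3) 0 * B (inord 3) (inord 1) + X (inord 0) 0 * Y (inord 4) 0 * B (inord 3) (inord 2) + X (inord 0) 0 * Y (inord 5) 0 * B (inord 3) (inord 3) + X (inord 1) 0 * Y (inord 2) 0 * C (inord 3) (inord 0) + X (inord 1) 0 * Y (inord 3) 0 * C (inord 3) (inord 1) + X (inord 1) 0 * Y (inord 4) 0 * C (inord 3) (inord 2) + X (inord 1) 0 * Y (inord 5) 0 * C (inord 3) (inord 3) - X (inord 2) 0 * Y (inord 0) 0 * B (inord 3) (inord 0) - X (inord 2) 0 * Y (inord 1) 0 * C (inord 3) (inord 0) - X (inord 2) 0 * Y (inord 6) 0 * A (inord 3) (inord 0) - X (inord 3) 0 * Y (inord 0) 0 * B (inord 3) (inord 1) - X (inord 3) 0 * Y (inord 1) 0 * C (inord 3) (inord 1) - X (inord 3) 0 * Y (inord 6) 0 * A (inord 3) (inord 1) - X (inord 4) 0 * Y (inord 0) 0 * B (inord 3) (inord 2) - X (inord 4) 0 * Y (inord 1) 0 * C (inord 3) (inord 2) - X (inord 4) 0 * Y (inord 6) 0 * A (inord 3) (inord 2) - X (inord 5) 0 * Y (inord 0) 0 * B (inord 3) (inord 3) - X (inord 5) 0 * Y (inord 1) 0 * C (inord 3) (inord 3) - X (inord 5) 0 * Y (inord 6) 0 * A (inord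 3) (inord 3) + X (inord 6) 0 * Y (inord 2) 0 * A (inord 3) (inord 0) + X (inord 6) 0 * Y (inord 3) 0 * A (inord 3) (inord 1) + X (inord 6) 0 * Y (inord 4) 0 * A (inord 3) (inord 2) + X (inord 6) 0 * Y (inord 5) 0 * A (inord 3) (inord 3).
Proof. rewrite brkT //; under eq_bigr => i _ do rewrite sum7; rewrite sum7 !val7 // /T /a7 /a1 /=; ring. Qed.
Lemma brk6 (x y z w : R) (A B C : 'M[R]_4) (X Y : 'cV[R]_7) :
  bracket x y z w A B C X Y (inord 6) 0 = 0.
Proof. rewrite brkT //; under eq_bigr => i _ do rewrite sum7; rewrite sum7 !val7 // /T /a7 /a1 /=; ring. Qed.
Lemma d3E (x y z w : R) (A B C : 'M[R]_4) (X0 X1 X2 X3 : 'cV[R]_7) :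
  d3 (bracket x y z w A B C) (@phi R) X0 X1 X2 X3 = D0123 x y z w A B C * m4 0 1 2 3 X0 X1 X2 X3 + D0124 x y z w A B C * m4 0 1 2 4 X0 X1 X2 X3 + D0125 x y z w A B C * m4 0 1 2 5 X0 X1 X2 X3 + D0134 x y z w A B C * m4 0 1 3 4 X0 X1 X2 X3 + D0135 x y z w A B C * m4 0 1 3 5 X0 X1 X2 X3 + D0145 x y z w A B C * m4 0 1 4 5 X0 X1 X2 X3 + D0236 x y z w A B C * m4 0 2 3 6 X0 X1 X2 X3 + D0246 x y z w A B C * m4 0 2 4 6 X0 X1 X2 X3 + D0256 x y z w A B C * m4 0 2 5 6 X0 X1 X2 X3 + D0346 x y z w A B C * m4 0 3 4 6 X0 X1 X2 X3 + D0356 x y z w A B C * m4 0 3 5 6 X0 X1 X2 X3 + D0456 x y z w A B C * m4 0 4 5 6 X0 X1 X2 X3 + D1236 x y z w A B C * m4 1 2 3 6 X0 X1 X2 X3 + D1246 x y z w A B C * m4 1 2 4 6 X0 X1 X2 X3 + D1256 x y z w A B C * m4 1 2 5 6 X0 X1 X2 X3 + D1346 x y z w A B C * m4 1 3 4 6 X0 X1 X2 X3 + D1356 x y z w A B C * m4 1 3 5 6 X0 X1 X2 X3 + D1456 x y z w A B C * m4 1 4 5 6 X0 X1 X2 X3.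
Proof.
rewrite /d3 /phi !e3E !brk0 !brk1 !brk2 !brk3 !brk4 !brk5 !brk6 /m4 /D0123 /D0124 /D0125 /D0134 /D0135 /D0145 /D0236 /D0246 /D0256 /D0346 /D0356 /D0456 /D1236 /D1246 /D1256 /D1346 /D1356 /D1456.
ring.
Qed.
Lemma mul4 (M : 'M[R]_4) (v : 'cV[R]_4) a :
  (M *m v) (inord a) 0 = M (inord a) (inord 0) * v (inord 0) 0 + M (inord a) (inord 1) * v (inord 1) 0
    + M (inord a) (inord 2) * v (inord 2) 0 + M (inord a) (inord 3) * v (inord 3) 0.
Proof. by rewrite mxE sum4. Qed.
Lemma ebnE n k : (n < 7)%N -> (k < 7)%N -> ebn R n (inord k) 0 = (n == k)%:R.
Proof. by move=> hn hk; rewrite /ebn ebasE !val7. Qed.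
Definition e4 (a : nat) : 'cV[R]_4 := delta_mx (inord a) 0.
Lemma e4E n k : (n < 4)%N -> (k < 4)%N -> e4 n (inord k) 0 = (n == k)%:R.
Proof. by move=> hn hk; rewrite /e4 mxE eqxx andbT -val_eqE !val4 // eq_sym. Qed.

Definition cl7 (n : nat) : nat := if (n < 7)%N then n else 0%N.
Definition cl4 (n : nat) : nat := if (n < 4)%N then n else 0%N.
Lemma inordE7 n : val (inord n : 'I_7) = cl7 n.
Proof.
rewrite /cl7; case: ltnP => h; first exact: inordK.
by rewrite /inord /insubd insubN //= ltnNge h.
Qed.
Lemma inordE4 n : val (inord n : 'I_4) = cl4 n.
Proof.
rewrite /cl4; case: ltnP => h; first exact: inordK.
by rewrite /inord /insubd insubN //= ltnNge h.
Qed.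
Lemma ebnF n k : ebn R n (inord k) 0 = (cl7 n == cl7 k)%:R.
Proof. by rewrite /ebn ebasE !inordE7. Qed.
Lemma e4F n k : e4 n (inord k) 0 = (cl4 n == cl4 k)%:R.
Proof. by rewrite /e4 mxE eqxx andbT -val_eqE !inordE4 eq_sym. Qed.
Lemma m4F a b c d p q r s : m4 a b c d (ebn R p) (ebn R q) (ebn R r) (ebn R s) =
  (cl7 p == cl7 a)%:R * (cl7 q == cl7 b)%:R * (cl7 r == cl7 c)%:R * (cl7 s == cl7 d)%:R
  - (cl7 p == cl7 a)%:R * (cl7 q == cl7 b)%:R * (cl7 r == cl7 d)%:R * (cl7 s == cl7 c)%:R
  - (cl7 p == cl7 a)%:R * (cl7 q == cl7 c)%:R * (cl7 r == cl7 b)%:R * (cl7 s == cl7 d)%:R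
  + (cl7 p == cl7 a)%:R * (cl7 q == cl7 c)%:R * (cl7 r == cl7 d)%:R * (cl7 s == cl7 b)%:R
  + (cl7 p == cl7 a)%:R * (cl7 q == cl7 d)%:R * (cl7 r == cl7 b)%:R * (cl7 s == cl7 c)%:R
  - (cl7 p == cl7 a)%:R * (cl7 q == cl7 d)%:R * (cl7 r == cl7 c)%:R * (cl7 s == cl7 b)%:R
  - (cl7 p == cl7 b)%:R * (cl7 q == cl7 a)%:R * (cl7 r == cl7 c)%:R * (cl7 s == cl7 d)%:R
  + (cl7 p == cl7 b)%:R * (cl7 q == cl7 a)%:R * (cl7 r == cl7 d)%:R * (cl7 s == cl7 c)%:R
  + (cl7 p == cl7 b)%:R * (cl7 q == cl7 c)%:R * (cl7 r == cl7 a)%:R * (cl7 s == cl7 d)%:R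
  - (cl7 p == cl7 b)%:R * (cl7 q == cl7 c)%:R * (cl7 r == cl7 d)%:R * (cl7 s == cl7 a)%:R
  - (cl7 p == cl7 b)%:R * (cl7 q == cl7 d)%:R * (cl7 r == cl7 a)%:R * (cl7 s == cl7 c)%:R
  + (cl7 p == cl7 b)%:R * (cl7 q == cl7 d)%:R * (cl7 r == cl7 c)%:R * (cl7 s == cl7 a)%:R
  + (cl7 p == cl7 c)%:R * (cl7 q == cl7 a)%:R * (cl7 r == cl7 b)%:R * (cl7 s == cl7 d)%:R
  - (cl7 p == cl7 c)%:R * (cl7 q == cl7 a)%:R * (cl7 r == cl7 d)%:R * (cl7 s == cl7 b)%:R
  - (cl7 p == cl7 c)%:R * (cl7 q == cl7 b)%:R * (cl7 r == cl7 a)%:R * (cl7 s == cl7 d)%:R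
  + (cl7 p == cl7 c)%:R * (cl7 q == cl7 b)%:R * (cl7 r == cl7 d)%:R * (cl7 s == cl7 a)%:R
  + (cl7 p == cl7 c)%:R * (cl7 q == cl7 d)%:R * (cl7 r == cl7 a)%:R * (cl7 s == cl7 b)%:R
  - (cl7 p == cl7 c)%:R * (cl7 q == cl7 d)%:R * (cl7 r == cl7 b)%:R * (cl7 s == cl7 a)%:R
  - (cl7 p == cl7 d)%:R * (cl7 q == cl7 a)%:R * (cl7 r == cl7 b)%:R * (cl7 s == cl7 c)%:R
  + (cl7 p == cl7 d)%:R * (cl7 q == cl7 a)%:R * (cl7 r == cl7 c)%:R * (cl7 s == cl7 b)%:R
  + (cl7 p == cl7 d)%:R * (cl7 q == cl7 b)%:R * (cl7 r == cl7 a)%:R * (cl7 s == cl7 c)%:R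
  - (cl7 p == cl7 d)%:R * (cl7 q == cl7 b)%:R * (cl7 r == cl7 c)%:R * (cl7 s == cl7 a)%:R
  - (cl7 p == cl7 d)%:R * (cl7 q == cl7 c)%:R * (cl7 r == cl7 a)%:R * (cl7 s == cl7 b)%:R
  + (cl7 p == cl7 d)%:R * (cl7 q == cl7 c)%:R * (cl7 r == cl7 b)%:R * (cl7 s == cl7 a)%:R.
Proof. by rewrite /m4 !ebnF. Qed.
Lemma m2F a b p q : m2 a b (e4 p) (e4 q) =
  (cl4 p == cl4 a)%:R * (cl4 q == cl4 b)%:R - (cl4 p == cl4 b)%:R * (cl4 q == cl4 a)%:R.
Proof. by rewrite /m2 !e4F. Qed.
Lemma cond0E (x y z w : R) (A B C : 'M[R]_4) (X Y : 'cV[R]_4) :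
  theta A (@omega1 R) X Y - (theta B (@omega7 R) X Y + x * omega1 X Y + y * omega2 X Y) =
  (- D0236 x y z w A B C * m2 0 1 X Y) + (- D0246 x y z w A B C * m2 0 2 X Y) + (- D0256 x y z w A B C * m2 0 3 X Y) + (- D0346 x y z w A B C * m2 1 2 X Y) + (- D0356 x y z w A B C * m2 1 3 X Y) + (- D0456 x y z w A B C * m2 2 3 X Y).
Proof.
rewrite /theta /omega1 /omega7 /omega2 !e2E !mul4 /m2 /D0123 /D0124 /D0125 /D0134 /D0135 /D0145 /D0236 /D0246 /D0256 /D0346 /D0356 /D0456 /D1236 /D1246 /D1256 /D1346 /D1356 /D1456.
ring.
Qed.
Lemma cond1E (x y z w : R) (A B C : 'M[R]_4) (X Y : 'cV[R]_4) :
  theta A (@omega2 R) X Y - (theta C (@omega7 R) X Y + z * omega1 X Y + w * omega2 X Y) =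
  (- D1236 x y z w A B C * m2 0 1 X Y) + (- D1246 x y z w A B C * m2 0 2 X Y) + (- D1256 x y z w A B C * m2 0 3 X Y) + (- D1346 x y z w A B C * m2 1 2 X Y) + (- D1356 x y z w A B C * m2 1 3 X Y) + (- D1456 x y z w A B C * m2 2 3 X Y).
Proof.
rewrite /theta /omega1 /omega7 /omega2 !e2E !mul4 /m2 /D0123 /D0124 /D0125 /D0134 /D0135 /D0145 /D0236 /D0246 /D0256 /D0346 /D0356 /D0456 /D1236 /D1246 /D1256 /D1346 /D1356 /D1456.
ring.
Qed.
Lemma cond2E (x y z w : R) (A B C : 'M[R]_4) (X Y : 'cV[R]_4) :
  theta B (@omega2 R) X Y - theta C (@omega1 R) X Y =
  (D0123 x y z w A B C * m2 0 1 X Y) + (D0124 x y z w A B C * m2 0 2 X Y) + (D0125 x y z w A B C * m2 0 3 X Y) + (D0134 x y z w A B C * m2 1 2 X Y) + (D0135 x y z w A B C * m2 1 3 X Y) + (D0145 x y z w A B C * m2 2 3 X Y).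
Proof.
rewrite /theta /omega1 /omega7 /omega2 !e2E !mul4 /m2 /D0123 /D0124 /D0125 /D0134 /D0135 /D0145 /D0236 /D0246 /D0256 /D0346 /D0356 /D0456 /D1236 /D1246 /D1256 /D1346 /D1356 /D1456.
ring.
Qed.
End S.

Theorem corollary2p5 (R : realFieldType) (x y z w : R) (A B C : 'M[R]_4)
  (htrB : \tr B = 0) (htrC : \tr C = 0)
  (hAB : A *m B - B *m A = x *: B + y *: C)
  (hAC : A *m C - C *m A = z *: B + w *: C)
  (hBC : B *m C - C *m B = 0) :
  (forall X0 X1 X2 X3 : 'cV[R]_7,
      d3 (bracket x y z w A B C) (@phi R) X0 X1 X2 X3 = 0)
  <->
  [/\ forall X Y : 'cV[R]_4,
        theta A (@omega1 R) X Y
        = theta B (@omega7 R) X Y + x * omega1 X Y + y * omega2 X Y,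
      forall X Y : 'cV[R]_4,
        theta A (@omega2 R) X Y
        = theta C (@omega7 R) X Y + z * omega1 X Y + w * omega2 X Y
    & forall X Y : 'cV[R]_4,
        theta B (@omega2 R) X Y = theta C (@omega1 R) X Y].
Proof.
clear htrB htrC hAB hAC hBC.
split.
- move=> H.
  have h0123 : D0123 R x y z w A B C = 0.
    have := H (ebn R 0) (ebn R 1) (ebn R 2) (ebn R 3).
    rewrite d3E !m4F /cl7 /= => <-; ring.
  have h0124 : D0124 R x y z w A B C = 0.
    have := H (ebn R 0) (ebn R 1) (ebn R 2) (ebn R 4).
    rewrite d3E !m4F /cl7 /= => <-; ring.
  have h0125 : D0125 R x y z w A B C = 0.
    have := H (ebn R 0) (ebn R 1) (ebn R 2) (ebn R 5).
    rewrite d3E !m4F /cl7 /= => <-; ring.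
  have h0134 : D0134 R x y z w A B C = 0.
    have := H (ebn R 0) (ebn R 1) (ebn R 3) (ebn R 4).
    rewrite d3E !m4F /cl7 /= => <-; ring.
  have h0135 : D0135 R x y z w A B C = 0.
    have := H (ebn R 0) (ebn R 1) (ebn R 3) (ebn R 5).
    rewrite d3E !m4F /cl7 /= => <-; ring.
  have h0145 : D0145 R x y z w A B C = 0.
    have := H (ebn R 0) (ebn R 1) (ebn R 4) (ebn R 5).
    rewrite d3E !m4F /cl7 /= => <-; ring.
  have h0236 : D0236 R x y z w A B C = 0.
    have := H (ebn R 0) (ebn R 2) (ebn R 3) (ebn R 6).
    rewrite d3E !m4F /cl7 /= => <-; ring.
  have h0246 : D0246 R x y z w A B C = 0.
    have := H (ebn R 0) (ebn R 2) (ebn R 4) (ebn R 6).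
    rewrite d3E !m4F /cl7 /= => <-; ring.
  have h0256 : D0256 R x y z w A B C = 0.
    have := H (ebn R 0) (ebn R 2) (ebn R 5) (ebn R 6).
    rewrite d3E !m4F /cl7 /= => <-; ring.
  have h0346 : D0346 R x y z w A B C = 0.
    have := H (ebn R 0) (ebn R 3) (ebn R 4) (ebn R 6).
    rewrite d3E !m4F /cl7 /= => <-; ring.
  have h0356 : D0356 R x y z w A B C = 0.
    have := H (ebn R 0) (ebn R 3) (ebn R 5) (ebn R 6).
    rewrite d3E !m4F /cl7 /= => <-; ring.
  have h0456 : D0456 R x y z w A B C = 0.
    have := H (ebn R 0) (ebn R 4) (ebn R 5) (ebn R 6).
    rewrite d3E !m4F /cl7 /= => <-; ring.
  have h1236 : D1236 R x y z w A B C = 0.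
    have := H (ebn R 1) (ebn R 2) (ebn R 3) (ebn R 6).
    rewrite d3E !m4F /cl7 /= => <-; ring.
  have h1246 : D1246 R x y z w A B C = 0.
    have := H (ebn R 1) (ebn R 2) (ebn R 4) (ebn R 6).
    rewrite d3E !m4F /cl7 /= => <-; ring.
  have h1256 : D1256 R x y z w A B C = 0.
    have := H (ebn R 1) (ebn R 2) (ebn R 5) (ebn R 6).
    rewrite d3E !m4F /cl7 /= => <-; ring.
  have h1346 : D1346 R x y z w A B C = 0.
    have := H (ebn R 1) (ebn R 3) (ebn R 4) (ebn R 6).
    rewrite d3E !m4F /cl7 /= => <-; ring.
  have h1356 : D1356 R x y z w A B C = 0.
    have := H (ebn R 1) (ebn R 3) (ebn R 5) (ebn R 6).
    rewrite d3E !m4F /cl7 /= => <-; ring.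
  have h1456 : D1456 R x y z w A B C = 0.
    have := H (ebn R 1) (ebn R 4) (ebn R 5) (ebn R 6).
    rewrite d3E !m4F /cl7 /= => <-; ring.
  split => X Y; apply/eqP; rewrite -subr_eq0; [rewrite (cond0E R x y z w A B C) | rewrite (cond1E R x y z w A B C) | rewrite (cond2E R x y z w A B C)];
    rewrite ?h0123 ?h0124 ?h0125 ?h0134 ?h0135 ?h0145 ?h0236 ?h0246 ?h0256 ?h0346 ?h0356 ?h0456 ?h1236 ?h1246 ?h1256 ?h1346 ?h1356 ?h1456; apply/eqP; ring.
- case=> H1 H2 H3 X0 X1 X2 X3.
  have h0236 : D0236 R x y z w A B C = 0.
    have := H1 (e4 R 0) (e4 R 1); move/eqP; rewrite -subr_eq0 (cond0E R x y z w A B C) !m2F /cl4 /= => /eqP.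
    by move/(congr1 (fun t => - t)); rewrite oppr0 => <-; ring.
  have h0246 : D0246 R x y z w A B C = 0.
    have := H1 (e4 R 0) (e4 R 2); move/eqP; rewrite -subr_eq0 (cond0E R x y z w A B C) !m2F /cl4 /= => /eqP.
    by move/(congr1 (fun t => - t)); rewrite oppr0 => <-; ring.
  have h0256 : D0256 R x y z w A B C = 0.
    have := H1 (e4 R 0) (e4 R 3); move/eqP; rewrite -subr_eq0 (cond0E R x y z w A B C) !m2F /cl4 /= => /eqP.
    by move/(congr1 (fun t => - t)); rewrite oppr0 => <-; ring.
  have h0346 : D0346 R x y z w A B C = 0.
    have := H1 (e4 R 1) (e4 R 2); move/eqP; rewrite -subr_eq0 (cond0E R x y z w A B C) !m2F /cl4 /= => /eqP.
    by move/(congr1 (fun t => - t)); rewrite oppr0 => <-; ring.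
  have h0356 : D0356 R x y z w A B C = 0.
    have := H1 (e4 R 1) (e4 R 3); move/eqP; rewrite -subr_eq0 (cond0E R x y z w A B C) !m2F /cl4 /= => /eqP.
    by move/(congr1 (fun t => - t)); rewrite oppr0 => <-; ring.
  have h0456 : D0456 R x y z w A B C = 0.
    have := H1 (e4 R 2) (e4 R 3); move/eqP; rewrite -subr_eq0 (cond0E R x y z w A B C) !m2F /cl4 /= => /eqP.
    by move/(congr1 (fun t => - t)); rewrite oppr0 => <-; ring.
  have h1236 : D1236 R x y z w A B C = 0.
    have := H2 (e4 R 0) (e4 R 1); move/eqP; rewrite -subr_eq0 (cond1E R x y z w A B C) !m2F /cl4 /= => /eqP.
    by move/(congr1 (fun t => - t)); rewrite oppr0 => <-; ring.
  have h1246 : D1246 R x y z w A B C = 0.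
    have := H2 (e4 R 0) (e4 R 2); move/eqP; rewrite -subr_eq0 (cond1E R x y z w A B C) !m2F /cl4 /= => /eqP.
    by move/(congr1 (fun t => - t)); rewrite oppr0 => <-; ring.
  have h1256 : D1256 R x y z w A B C = 0.
    have := H2 (e4 R 0) (e4 R 3); move/eqP; rewrite -subr_eq0 (cond1E R x y z w A B C) !m2F /cl4 /= => /eqP.
    by move/(congr1 (fun t => - t)); rewrite oppr0 => <-; ring.
  have h1346 : D1346 R x y z w A B C = 0.
    have := H2 (e4 R 1) (e4 R 2); move/eqP; rewrite -subr_eq0 (cond1E R x y z w A B C) !m2F /cl4 /= => /eqP.
    by move/(congr1 (fun t => - t)); rewrite oppr0 => <-; ring.
  have h1356 : D1356 R x y z w A B C = 0.
    have := H2 (e4 R 1) (e4 R 3); move/eqP; rewrite -subr_eq0 (cond1E R x y z w A B C) !m2F /cl4 /= => /eqP.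
    by move/(congr1 (fun t => - t)); rewrite oppr0 => <-; ring.
  have h1456 : D1456 R x y z w A B C = 0.
    have := H2 (e4 R 2) (e4 R 3); move/eqP; rewrite -subr_eq0 (cond1E R x y z w A B C) !m2F /cl4 /= => /eqP.
    by move/(congr1 (fun t => - t)); rewrite oppr0 => <-; ring.
  have h0123 : D0123 R x y z w A B C = 0.
    have := H3 (e4 R 0) (e4 R 1); move/eqP; rewrite -subr_eq0 (cond2E R x y z w A B C) !m2F /cl4 /= => /eqP.
    by move=> <-; ring.
  have h0124 : D0124 R x y z w A B C = 0.
    have := H3 (e4 R 0) (e4 R 2); move/eqP; rewrite -subr_eq0 (cond2E R x y z w A B C) !m2F /cl4 /= => /eqP.
    by move=> <-; ring.
  have h0125 : D0125 R x y z w A B C = 0.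
    have := H3 (e4 R 0) (e4 R 3); move/eqP; rewrite -subr_eq0 (cond2E R x y z w A B C) !m2F /cl4 /= => /eqP.
    by move=> <-; ring.
  have h0134 : D0134 R x y z w A B C = 0.
    have := H3 (e4 R 1) (e4 R 2); move/eqP; rewrite -subr_eq0 (cond2E R x y z w A B C) !m2F /cl4 /= => /eqP.
    by move=> <-; ring.
  have h0135 : D0135 R x y z w A B C = 0.
    have := H3 (e4 R 1) (e4 R 3); move/eqP; rewrite -subr_eq0 (cond2E R x y z w A B C) !m2F /cl4 /= => /eqP.
    by move=> <-; ring.
  have h0145 : D0145 R x y z w A B C = 0.
    have := H3 (e4 R 2) (e4 R 3); move/eqP; rewrite -subr_eq0 (cond2E R x y z w A B C) !m2F /cl4 /= => /eqP.
    by move=> <-; ring.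
  rewrite d3E h0123 h0124 h0125 h0134 h0135 h0145 h0236 h0246 h0256 h0346 h0356 h0456 h1236 h1246 h1256 h1346 h1356 h1456; ring.
Qed.
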